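(* Let $(X,d)$ be a pointed metric space, let $((x_i,y_i))_{i\in I}$ be a Lipschitz interpolating family in $\widetilde X$ for $\mathrm{Lip}_0(X)$ with Lipschitz interpolation constant $M$, let $T:\mathrm{Lip}_0(X)\to\ell_\infty(I)$ be its Lipschitz interpolating operator, and let $S:\ell_1(I)\to\mathcal F(X)$ be $S(\lambda)=\sum_{i\in I}\lambda_i m_{x_i,y_i}$. The following statements are equivalent: (i) There exists a Beurling set $(f_i)_{i\in I}$ of functions in $\mathrm{Lip}_0(X)$ for $((x_i,y_i))_{i\in I}$. (ii) There exists a bounded linear operator $R:\ell_\infty(I)\to\mathrm{Lip}_0(X)$ which is weak*-to-weak* continuous, with $\|R\|=M$ and $T\circ R=\mathrm{Id}_{\ell_\infty(I)}$. (iii) There exists a bounded linear operator $P:\mathcal F(X)\to\ell_1(I)$ with $\|P\|=M$ and $P\circ S=\mathrm{Id}_{\ell_1(I)}$. (iv) There exists a Lipschitz map $f:X\to\ell_1(I)$ with $f(0)=0$, Lipschitz constant $\|f\|=M$, and $\dfrac{f(x_i)-f(y_i)}{d(x_i,y_i)}=e_i$ for all $i\in I$. (v) There exists a bounded linear operator $R_0:c_0(I)\to\mathrm{Lip}_0(X)$ with $\|R_0\|\leq M$ and $T\circ R_0=\mathrm{Id}_{c_0(I)}$.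
   Context: All spaces are real. $(X,d)$ is a metric space with base point $0$, $\widetilde{X}=\{(x,y)\in X\times X: x\neq y\}$. $\mathrm{Lip}_0(X)$ is the Banach space of Lipschitz $f:X\to\mathbb{R}$ with $f(0)=0$, normed by $\|f\|=\sup_{(x,y)\in\widetilde X}|f(x)-f(y)|/d(x,y)$; similarly for Banach-space-valued maps with $\|\cdot\|$ in place of $|\cdot|$. For $x\in X$, $\delta_x\in\mathrm{Lip}_0(X)^*$ is $\delta_x(f)=f(x)$; the Lipschitz-free space $\mathcal F(X)$ is the closed linear span of $\{\delta_x\}$ in $\mathrm{Lip}_0(X)^*$, and $\mathrm{Lip}_0(X)$ is identified with $\mathcal F(X)^*$ (weak* topology accordingly); $\ell_\infty(I)=\ell_1(I)^*$. For $(x,y)\in\widetilde X$, $m_{x,y}=(\delta_x-\delta_y)/d(x,y)$. $e_i$ are the unit vectors of $\ell_1(I)$. For a family $((x_i,y_i))_{i\in I}$ in $\widetilde X$, $T(f)=\big((f(x_i)-f(y_i))/d(x_i,y_i)\big)_{i\in I}$; the family is Lipschitz interpolating for $\mathrm{Lip}_0(X)$ if $T:\mathrm{Lip}_0(X)\to\ell_\infty(I)$ is surjective, and then its Lipschitz interpolation constant is $M=\inf\{K\geq 1: \forall \alpha\in\ell_\infty(I), \|\alpha\|_\infty\le1,\ \exists f\in\mathrm{Lip}_0(X),\ \|f\|\le K,\ T(f)=\alpha\}$ (note $T$ maps $\mathrm{Lip}_0(X)$ into $\ell_\infty(I)\supseteq c_0(I)$). A Beurling set of functions in $\mathrm{Lip}_0(X)$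 for such a family is a family $(f_i)_{i\in I}$ of functions $f_i:X\to\mathbb R$ with $f_i(0)=0$, $(f_i(x_j)-f_i(y_j))/d(x_j,y_j)=\delta_{ij}$ for all $i,j\in I$, and $\sup_{(x,y)\in\widetilde X}\sum_{i\in I}|f_i(x)-f_i(y)|/d(x,y)\leq M$. *)

(* Defs.v *)
From Stdlib Require Import Reals Lra List ClassicalEpsilon.
Open Scope R_scope.
Set Implicit Arguments.

Definition lsum {I : Type} (a : I -> R) (L : list I) : R :=
  fold_right (fun i acc => a i + acc) 0 L.

(* [a] has unordered sum [s]: net convergence of finite partial sums. *)
Definition has_sum {I : Type} (a : I -> R) (s : R) : Prop :=
  forall eps, 0 < eps -> exists L0 : list I, NoDup L0 /\
    forall L : list I, NoDup L -> incl L0 L -> Rabs (lsum a L - s) <= eps.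

(* The value of the unordered sum (0 if it does not exist). *)
Definition usum {I : Type} (a : I -> R) : R :=
  epsilon (inhabits 0) (fun s => has_sum a s).

Definition is_metric {X : Type} (d : X -> X -> R) : Prop :=
  (forall x y, 0 <= d x y) /\
  (forall x y, d x y = 0 <-> x = y) /\
  (forall x y, d x y = d y x) /\
  (forall x y z, d x z <= d x y + d y z).

(** * Norm bounds in the various spaces ("||v|| <= c") *)

Definition linf_le {I : Type} (a : I -> R) (c : R) : Prop := forall i, Rabs (a i) <= c.
Definition linf {I : Type} (a : I -> R) : Prop := exists c, linf_le a c.

Definition c0 {I : Type} (a : I -> R) : Prop :=
  forall eps, 0 < eps -> exists L : list I, forall i, eps <= Rabs (a i) -> In i L.

Definition l1_le {I : Type} (l : I -> R) (c : R) : Prop :=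
  forall L : list I, NoDup L -> lsum (fun i => Rabs (l i)) L <= c.
Definition l1 {I : Type} (l : I -> R) : Prop := exists c, l1_le l c.

Definition lip_le {X : Type} (d : X -> X -> R) (f : X -> R) (c : R) : Prop :=
  forall x y, Rabs (f x - f y) <= c * d x y.
Definition lip0 {X : Type} (d : X -> X -> R) (x0 : X) (f : X -> R) : Prop :=
  f x0 = 0 /\ exists c, lip_le d f c.

Definition dual_le {X : Type} (d : X -> X -> R) (x0 : X) (phi : (X -> R) -> R) (c : R) : Prop :=
  forall f K, lip0 d x0 f -> 0 <= K -> lip_le d f K -> Rabs (phi f) <= c * K.

Definition delta {X : Type} (x : X) : (X -> R) -> R := fun f => f x.
Definition comb_delta {X : Type} (c : list (R * X)) : (X -> R) -> R :=
  fun f => fold_right (fun p acc => fst p * f (snd p) + acc) 0 c.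

(* Lipschitz-free space F(X): closure in Lip_0(X)^* of span{delta_x} *)
Definition Fmem {X : Type} (d : X -> X -> R) (x0 : X) (phi : (X -> R) -> R) : Prop :=
  forall eps, 0 < eps -> exists c : list (R * X),
    dual_le d x0 (fun f => phi f - comb_delta c f) eps.

Definition molecule {X : Type} (d : X -> X -> R) (x y : X) : (X -> R) -> R :=
  fun f => (f x - f y) / d x y.

Definition linear_on {V W : Type} (dom : V -> Prop)
  (add : V -> V -> V) (scal : R -> V -> V)
  (weq : W -> W -> Prop) (addW : W -> W -> W) (scalW : R -> W -> W)
  (A : V -> W) : Prop :=
  forall a b u v, dom u -> dom v ->
    weq (A (add (scal a u) (scal b v))) (addW (scalW a (A u)) (scalW b (A v))).

Definition fadd {D : Type} (u v : D -> R) : D -> R := fun z => u z + v z.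
Definition fscal {D : Type} (a : R) (u : D -> R) : D -> R := fun z => a * u z.
Definition feq {D : Type} (u v : D -> R) : Prop := forall z, u z = v z.

Definition op_bounded {V W : Type} (dom : V -> Prop)
  (nV : V -> R -> Prop) (nW : W -> R -> Prop) (A : V -> W) (M : R) : Prop :=
  forall v c, dom v -> 0 <= c -> nV v c -> nW (A v) (M * c).

Definition op_norm_eq {V W : Type} (dom : V -> Prop)
  (nV : V -> R -> Prop) (nW : W -> R -> Prop) (A : V -> W) (M : R) : Prop :=
  op_bounded dom nV nW A M /\
  forall C, C < M -> ~ op_bounded dom nV nW A C.

Definition Top {X I : Type} (d : X -> X -> R) (xs ys : I -> X) (f : X -> R) : I -> R :=
  fun i => (f (xs i) - f (ys i)) / d (xs i) (ys i).

Definition Sop {X I : Type} (d : X -> X -> R) (xs ys : I -> X) (l : I -> R) : (X -> R) -> R :=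
  fun f => usum (fun i => l i * molecule d (xs i) (ys i) f).

Definition lip_interpolating {X I : Type} (d : X -> X -> R) (x0 : X) (xs ys : I -> X) : Prop :=
  forall a : I -> R, linf a -> exists f, lip0 d x0 f /\ feq (Top d xs ys f) a.

Definition is_glb (P : R -> Prop) (m : R) : Prop :=
  (forall K, P K -> m <= K) /\ (forall m', (forall K, P K -> m' <= K) -> m' <= m).

Definition interp_const {X I : Type} (d : X -> X -> R) (x0 : X) (xs ys : I -> X) (M : R) : Prop :=
  is_glb (fun K => 1 <= K /\ forall a : I -> R, linf_le a 1 ->
            exists f, lip0 d x0 f /\ lip_le d f K /\ feq (Top d xs ys f) a) M.

Definition beurling_set {X I : Type} (d : X -> X -> R) (x0 : X) (xs ys : I -> X) (M : R)
  (fs : I -> X -> R) : Prop :=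
  (forall i, fs i x0 = 0) /\
  (forall i, Top d xs ys (fs i) i = 1 /\ forall j, j <> i -> Top d xs ys (fs i) j = 0) /\
  (forall x y, x <> y -> l1_le (fun i => (fs i x - fs i y) / d x y) M).

(* weak*-to-weak* continuity of A : ell_infty(I) = ell_1(I)^* -> Lip_0(X) = F(X)^*,
   via basic weak* neighbourhoods *)
Definition wstar_continuous {X I : Type} (d : X -> X -> R) (x0 : X)
  (A : (I -> R) -> (X -> R)) : Prop :=
  forall a, linf a ->
  forall (phis : list ((X -> R) -> R)) eps,
    (forall phi, In phi phis -> Fmem d x0 phi) -> 0 < eps ->
    exists (lams : list (I -> R)) delta,
      (forall l, In l lams -> l1 l) /\ 0 < delta /\
      forall b, linf b ->
        (forall l, In l lams -> Rabs (usum (fun i => (b i - a i) * l i)) < delta) ->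
        forall phi, In phi phis -> Rabs (phi (A b) - phi (A a)) < eps.

Definition cond_i {X I : Type} (d : X -> X -> R) (x0 : X) (xs ys : I -> X) (M : R) : Prop :=
  exists fs : I -> X -> R, beurling_set d x0 xs ys M fs.

Definition cond_ii {X I : Type} (d : X -> X -> R) (x0 : X) (xs ys : I -> X) (M : R) : Prop :=
  exists Rop : (I -> R) -> (X -> R),
    (forall a, linf a -> lip0 d x0 (Rop a)) /\
    linear_on linf fadd fscal feq fadd fscal Rop /\
    wstar_continuous d x0 Rop /\
    op_norm_eq linf linf_le (lip_le d) Rop M /\
    (forall a, linf a -> feq (Top d xs ys (Rop a)) a).

Definition cond_iii {X I : Type} (d : X -> X -> R) (x0 : X) (xs ys : I -> X) (M : R) : Prop :=
  exists P : ((X -> R) -> R) -> (I -> R),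
    (forall phi, Fmem d x0 phi -> l1 (P phi)) /\
    linear_on (Fmem d x0) fadd fscal feq fadd fscal P /\
    op_norm_eq (Fmem d x0) (dual_le d x0) l1_le P M /\
    (forall l, l1 l -> feq (P (Sop d xs ys l)) l).

Definition cond_iv {X I : Type} (d : X -> X -> R) (x0 : X) (xs ys : I -> X) (M : R) : Prop :=
  exists f : X -> (I -> R),
    feq (f x0) (fun _ => 0) /\
    (forall x, l1 (f x)) /\
    (* Lipschitz constant of f : X -> ell_1(I) equals M *)
    ((forall x y, l1_le (fadd (f x) (fscal (-1) (f y))) (M * d x y)) /\
     forall C, C < M -> ~ (forall x y, l1_le (fadd (f x) (fscal (-1) (f y))) (C * d x y))) /\
    (forall i, (f (xs i) i - f (ys i) i) / d (xs i) (ys i) = 1 /\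
       forall j, j <> i -> (f (xs i) j - f (ys i) j) / d (xs i) (ys i) = 0).

Definition cond_v {X I : Type} (d : X -> X -> R) (x0 : X) (xs ys : I -> X) (M : R) : Prop :=
  exists R0 : (I -> R) -> (X -> R),
    (forall a, c0 a -> lip0 d x0 (R0 a)) /\
    linear_on c0 fadd fscal feq fadd fscal R0 /\
    op_bounded c0 linf_le (lip_le d) R0 M /\
    (forall a, c0 a -> feq (Top d xs ys (R0 a)) a).

(* Main.v *)
Require Import Defs.
From Stdlib Require Import Reals List Lra Classical ClassicalEpsilon FunctionalExtensionality Permutation.
Open Scope R_scope.

Lemma lsum_nil {I : Type} (a : I -> R) : lsum a nil = 0.
Proof. reflexivity. Qed.
Lemma lsum_cons {I : Type} (a : I -> R) i L : lsum a (i :: L) = a i + lsum a L.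
Proof. reflexivity. Qed.

Lemma lsum_app {I : Type} (a : I -> R) L1 L2 : lsum a (L1 ++ L2) = lsum a L1 + lsum a L2.
Proof. induction L1; simpl; rewrite ?lsum_cons, ?lsum_nil; [lra|]. unfold lsum in *; simpl. rewrite IHL1. lra. Qed.

Lemma lsum_perm {I : Type} (a : I -> R) L1 L2 : Permutation L1 L2 -> lsum a L1 = lsum a L2.
Proof. induction 1; unfold lsum in *; simpl in *; lra. Qed.

Lemma lsum_plus {I : Type} (a b : I -> R) L : lsum (fun i => a i + b i) L = lsum a L + lsum b L.
Proof. induction L; unfold lsum in *; simpl in *; lra. Qed.

Lemma lsum_scal {I : Type} (c : R) (a : I -> R) L : lsum (fun i => c * a i) L = c * lsum a L.
Proof. induction L; unfold lsum in *; simpl in *; [lra|]. rewrite IHL. ring. Qed.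

Lemma lsum_le {I : Type} (a b : I -> R) L : (forall i, a i <= b i) -> lsum a L <= lsum b L.
Proof. intros H; induction L; unfold lsum in *; simpl in *; [lra|]. specialize (H a0). lra. Qed.

Lemma lsum_ext {I : Type} (a b : I -> R) L : (forall i, a i = b i) -> lsum a L = lsum b L.
Proof. intros H; induction L; unfold lsum in *; simpl in *; [lra|]. rewrite H, IHL. lra. Qed.

Lemma lsum_abs {I : Type} (a : I -> R) L : Rabs (lsum a L) <= lsum (fun i => Rabs (a i)) L.
Proof. induction L; unfold lsum in *; simpl in *. rewrite Rabs_R0; lra.
  eapply Rle_trans; [apply Rabs_triang|]. lra. Qed.

Lemma lsum_nonneg {I : Type} (a : I -> R) L : (forall i, 0 <= a i) -> 0 <= lsum a L.
Proof. intros H; induction L; unfold lsum in *; simpl in *; [lra|]. specialize (H a0). lra. Qed.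

Lemma lsum_incl {I : Type} (u : I -> R) : (forall i, 0 <= u i) ->
  forall L, NoDup L -> forall L0, NoDup L0 -> incl L0 L -> lsum u L0 <= lsum u L.
Proof.
  intros Hu L. induction L as [|a L IH]; intros HL L0 H0 Hi.
  - apply incl_l_nil in Hi. subst. simpl. lra.
  - inversion HL; subst. rewrite lsum_cons.
    destruct (classic (In a L0)) as [Ha|Ha].
    + destruct (in_split _ _ Ha) as [l1 [l2 ->]].
      rewrite (lsum_perm u _ (a :: l1 ++ l2)).
      2:{ symmetry. apply Permutation_middle. }
      rewrite lsum_cons.
      assert (lsum u (l1 ++ l2) <= lsum u L); [|lra].
      apply IH; auto. eapply NoDup_remove_1; eauto.
      intros x Hx. assert (Hx' : In x (a :: L)) by (apply Hi; apply in_app_or in Hx; apply in_or_app; destruct Hx; [left|right; right]; auto).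
      destruct Hx' as [<-|?]; auto.
      exfalso. eapply NoDup_remove_2; eauto.
    + assert (lsum u L0 <= lsum u L); [|specialize (Hu a); lra].
      apply IH; auto. intros x Hx. destruct (Hi x Hx) as [<-|?]; auto. contradiction.
Qed.

Lemma lsum_single {I : Type} (u : I -> R) j L : NoDup L -> In j L -> (forall i, i <> j -> u i = 0) -> lsum u L = u j.
Proof.
  intros HL Hj Hu. induction L as [|a L IH]; [destruct Hj|].
  inversion HL; subst. rewrite lsum_cons. destruct Hj as [<-|Hj].
  - assert (lsum u L = 0); [|lra].
    clear IH. induction L; [reflexivity|]. rewrite lsum_cons. inversion H2; subst.
    rewrite Hu, IHL; auto.
    * lra.
    * constructor; auto. intro; apply H1; right; auto.
    * intro; apply H1; right; auto.
    * intro E; apply H1; left; auto.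
  - rewrite IH; auto. rewrite Hu; [lra|]. intros ->; contradiction.
Qed.

Definition deq {I : Type} (x y : I) : {x = y} + {x <> y} := excluded_middle_informative (x = y).

Lemma union_list {I : Type} (L1 L2 : list I) : exists L, NoDup L /\ incl L1 L /\ incl L2 L.
Proof. exists (nodup deq (L1 ++ L2)). split; [apply NoDup_nodup|].
  split; intros x Hx; apply nodup_In; apply in_or_app; auto. Qed.

Lemma small0 (x : R) : (forall eps, 0 < eps -> Rabs x <= eps) -> x = 0.
Proof. intros H. destruct (Req_dec x 0); auto. exfalso.
  assert (Rabs x > 0) by (apply Rabs_pos_lt; auto). specialize (H (Rabs x / 2)). lra. Qed.

Lemma small0A (x A : R) : 0 <= A -> (forall eps, 0 < eps -> Rabs x <= eps * A) -> x = 0.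
Proof. intros HA H. apply small0. intros e He.
  specialize (H (e / (A + 1))). assert (0 < e / (A+1)) by (apply Rdiv_lt_0_compat; lra).
  specialize (H H0). eapply Rle_trans; [apply H|].
  assert (e / (A+1) * A <= e / (A+1) * (A+1)) by (apply Rmult_le_compat_l; lra).
  replace (e / (A+1) * (A+1)) with e in H1 by (field; lra). lra. Qed.

Lemma has_sum_unique {I : Type} (a : I -> R) s t : has_sum a s -> has_sum a t -> s = t.
Proof.
  intros Hs Ht. assert (s - t = 0); [|lra]. apply small0. intros e He.
  destruct (Hs (e/2)) as [L1 [N1 H1]]; [lra|]. destruct (Ht (e/2)) as [L2 [N2 H2]]; [lra|].
  destruct (union_list L1 L2) as [L [N [I1 I2]]].
  specialize (H1 L N I1). specialize (H2 L N I2).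
  replace (s - t) with (-(lsum a L - s) + (lsum a L - t)) by ring.
  eapply Rle_trans; [apply Rabs_triang|]. rewrite Rabs_Ropp. lra.
Qed.

Lemma usum_eq {I : Type} (a : I -> R) s : has_sum a s -> usum a = s.
Proof. intros H. unfold usum. apply (has_sum_unique a); auto.
  apply epsilon_spec. exists s; auto. Qed.

Lemma has_sum_ext {I : Type} (a b : I -> R) s : (forall i, a i = b i) -> has_sum a s -> has_sum b s.
Proof. intros H. replace b with a; auto. apply functional_extensionality; auto. Qed.

Lemma has_sum_lin {I : Type} (a b : I -> R) s t al be :
  has_sum a s -> has_sum b t -> has_sum (fun i => al * a i + be * b i) (al * s + be * t).
Proof.
  intros Hs Ht e He. set (k := Rabs al + Rabs be + 1).
  assert (Hk : 0 < k) by (unfold k; pose proof (Rabs_pos al); pose proof (Rabs_pos be); lra).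
  assert (He' : 0 < e / k) by (apply Rdiv_lt_0_compat; lra).
  destruct (Hs _ He') as [L1 [N1 H1]]. destruct (Ht _ He') as [L2 [N2 H2]].
  destruct (union_list L1 L2) as [L0 [N [I1 I2]]]. exists L0; split; auto.
  intros L NL IL. specialize (H1 L NL (incl_tran I1 IL)). specialize (H2 L NL (incl_tran I2 IL)).
  rewrite lsum_plus, !lsum_scal.
  replace (al * lsum a L + be * lsum b L - (al * s + be * t)) with
    (al * (lsum a L - s) + be * (lsum b L - t)) by ring.
  eapply Rle_trans; [apply Rabs_triang|]. rewrite !Rabs_mult.
  assert (Rabs al * Rabs (lsum a L - s) <= Rabs al * (e/k)) by (apply Rmult_le_compat_l; auto using Rabs_pos).
  assert (Rabs be * Rabs (lsum b L - t) <= Rabs be * (e/k)) by (apply Rmult_le_compat_l; auto using Rabs_pos).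
  assert (Rabs al * (e/k) + Rabs be * (e/k) <= e); [|lra].
  replace (Rabs al * (e/k) + Rabs be * (e/k)) with (e * ((Rabs al + Rabs be) / k)) by (field; lra).
  assert ((Rabs al + Rabs be) / k <= 1).
  { apply Rmult_le_reg_r with k; auto. unfold Rdiv. rewrite Rmult_assoc, Rinv_l; [|lra]. unfold k; lra. }
  assert (0 <= (Rabs al + Rabs be) / k) by (apply Rmult_le_pos; [pose proof (Rabs_pos al); pose proof (Rabs_pos be); lra| left; apply Rinv_0_lt_compat; lra]).
  rewrite <- (Rmult_1_r e) at 2. apply Rmult_le_compat_l; lra.
Qed.

Lemma has_sum_single {I : Type} (a : I -> R) j : (forall i, i <> j -> a i = 0) -> has_sum a (a j).
Proof. intros H e He. exists (j :: nil). split; [repeat constructor; auto|].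
  intros L NL IL. rewrite (lsum_single a j); auto. unfold Rminus; rewrite Rplus_opp_r, Rabs_R0; lra.
  apply IL; left; auto. Qed.

Lemma has_sum_bound {I : Type} (a : I -> R) s C : has_sum a s ->
  (forall L, NoDup L -> lsum (fun i => Rabs (a i)) L <= C) -> Rabs s <= C.
Proof. intros Hs HC. assert (forall e, 0 < e -> Rabs s <= C + e); [|
   destruct (Rle_dec (Rabs s) C); auto; specialize (H ((Rabs s - C)/2)); lra].
  intros e He. destruct (Hs e He) as [L [N H]]. specialize (H L N (incl_refl _)).
  pose proof (lsum_abs a L). specialize (HC L N).
  replace s with (lsum a L - (lsum a L - s)) by ring.
  eapply Rle_trans; [apply Rabs_triang|]. rewrite Rabs_Ropp. pose proof (Rle_abs (lsum a L)). lra. Qed.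

Lemma has_sum_nonneg {I : Type} (u : I -> R) C : (forall i, 0 <= u i) ->
  (forall L, NoDup L -> lsum u L <= C) -> exists s, has_sum u s.
Proof.
  intros Hu HC. set (E := fun r => exists L, NoDup L /\ r = lsum u L).
  destruct (completeness E) as [m [Hm1 Hm2]].
  - exists C. intros r [L [N ->]]. auto.
  - exists 0. exists nil. split; [constructor|reflexivity].
  - exists m. intros e He.
    destruct (classic (exists L0, NoDup L0 /\ m - e < lsum u L0)) as [[L0 [N0 H0]]|Hn].
    + exists L0. split; auto. intros L NL IL.
      pose proof (lsum_incl u Hu L NL L0 N0 IL). assert (lsum u L <= m) by (apply Hm1; exists L; auto).
      rewrite Rabs_left1; lra.
    + exfalso. assert (m <= m - e); [|lra]. apply Hm2. intros r [L [N ->]].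
      destruct (Rle_dec (lsum u L) (m - e)); auto. exfalso; apply Hn. exists L; split; auto; lra.
Qed.

Lemma has_sum_exists {I : Type} (a : I -> R) C :
  (forall L, NoDup L -> lsum (fun i => Rabs (a i)) L <= C) -> exists s, has_sum a s.
Proof.
  intros HC.
  assert (Hp : forall i, 0 <= Rmax (a i) 0 <= Rabs (a i)) by (intros i; unfold Rmax, Rabs; destruct Rle_dec; destruct Rcase_abs; lra).
  assert (Hn : forall i, 0 <= Rmax (- a i) 0 <= Rabs (a i)) by (intros i; unfold Rmax, Rabs; destruct Rle_dec; destruct Rcase_abs; lra).
  assert (E1 : exists s, has_sum (fun i => Rmax (a i) 0) s).
  { apply has_sum_nonneg with C; [intros i; apply Hp|].
    intros L N; eapply Rle_trans; [apply lsum_le; intros i; apply Hp|auto]. }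
  destruct E1 as [s1 H1].
  assert (E2 : exists s, has_sum (fun i => Rmax (- a i) 0) s).
  { apply has_sum_nonneg with C; [intros i; apply Hn|].
    intros L N; eapply Rle_trans; [apply lsum_le; intros i; apply Hn|auto]. }
  destruct E2 as [s2 H2].
  exists (1 * s1 + (-1) * s2). eapply has_sum_ext; [|apply has_sum_lin; eauto].
  intros i; simpl. unfold Rmax; destruct Rle_dec; destruct Rle_dec; lra.
Qed.

Lemma has_sum_zero {I : Type} : has_sum (fun _ : I => 0) 0.
Proof. intros e He. exists nil. split; [constructor|]. intros L _ _.
  replace (lsum (fun _ : I => 0) L) with 0. rewrite Rminus_0_r, Rabs_R0; lra.
  induction L; simpl; auto. unfold lsum in *; simpl; lra. Qed.


Definition lin0 {X : Type} (d : X -> X -> R) (x0 : X) (psi : (X -> R) -> R) : Prop :=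
  forall f g a b, lip0 d x0 f -> lip0 d x0 g -> psi (fadd (fscal a f) (fscal b g)) = a * psi f + b * psi g.

Lemma d_nonneg {X : Type} (d : X -> X -> R) : is_metric d -> forall x y, 0 <= d x y.
Proof. intros [H _]; auto. Qed.
Lemma d_refl {X : Type} (d : X -> X -> R) : is_metric d -> forall x, d x x = 0.
Proof. intros [_ [H _]] x; apply H; auto. Qed.
Lemma d_pos {X : Type} (d : X -> X -> R) : is_metric d -> forall x y, x <> y -> 0 < d x y.
Proof. intros Hd x y Hxy. destruct (d_nonneg d Hd x y); auto. exfalso; apply Hxy.
  destruct Hd as [_ [H' _]]. apply H'; auto. Qed.

Lemma lip_nonneg {X : Type} (d : X -> X -> R) x0 f : is_metric d -> lip0 d x0 f -> exists K, 0 <= K /\ lip_le d f K.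
Proof. intros Hd [_ [c Hc]]. exists (Rmax c 0). split; [apply Rmax_r|].
  intros x y. eapply Rle_trans; [apply Hc|]. apply Rmult_le_compat_r; [apply d_nonneg; auto|apply Rmax_l]. Qed.

Lemma lip_comb {X : Type} (d : X -> X -> R) f g Kf Kg a b : is_metric d -> lip_le d f Kf -> lip_le d g Kg ->
  lip_le d (fadd (fscal a f) (fscal b g)) (Rabs a * Kf + Rabs b * Kg).
Proof. intros Hd Hf Hg x y. unfold fadd, fscal.
  replace (a * f x + b * g x - (a * f y + b * g y)) with (a * (f x - f y) + b * (g x - g y)) by ring.
  eapply Rle_trans; [apply Rabs_triang|]. rewrite !Rabs_mult.
  pose proof (Hf x y). pose proof (Hg x y).
  assert (Rabs a * Rabs (f x - f y) <= Rabs a * (Kf * d x y)) by (apply Rmult_le_compat_l; auto using Rabs_pos).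
  assert (Rabs b * Rabs (g x - g y) <= Rabs b * (Kg * d x y)) by (apply Rmult_le_compat_l; auto using Rabs_pos).
  lra. Qed.

Lemma lip0_comb {X : Type} (d : X -> X -> R) x0 f g a b : is_metric d -> lip0 d x0 f -> lip0 d x0 g ->
  lip0 d x0 (fadd (fscal a f) (fscal b g)).
Proof. intros Hd [Hf0 [cf Hf]] [Hg0 [cg Hg]]. split.
  unfold fadd, fscal; rewrite Hf0, Hg0; ring.
  eexists; apply lip_comb; eauto. Qed.

Lemma comb_lin {X : Type} (c : list (R * X)) f g a b :
  comb_delta c (fadd (fscal a f) (fscal b g)) = a * comb_delta c f + b * comb_delta c g.
Proof. induction c as [|[r x] c IH]; unfold comb_delta in *; simpl in *; [ring|].
  rewrite IH. unfold fadd, fscal. ring. Qed.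

Fixpoint cw {X : Type} (d : X -> X -> R) (x0 : X) (c : list (R * X)) : R :=
  match c with nil => 0 | p :: c' => Rabs (fst p) * d (snd p) x0 + cw d x0 c' end.

Lemma cw_nonneg {X : Type} (d : X -> X -> R) x0 c : is_metric d -> 0 <= cw d x0 c.
Proof. intros Hd; induction c; simpl; [lra|]. pose proof (Rabs_pos (fst a)).
  pose proof (d_nonneg d Hd (snd a) x0). nra. Qed.

Lemma comb_bound {X : Type} (d : X -> X -> R) x0 c f K : is_metric d -> f x0 = 0 -> lip_le d f K -> 0 <= K ->
  Rabs (comb_delta c f) <= cw d x0 c * K.
Proof. intros Hd H0 Hf HK. induction c as [|[r x] c IH]; unfold comb_delta in *; simpl in *.
  rewrite Rabs_R0; lra.
  eapply Rle_trans; [apply Rabs_triang|]. rewrite Rabs_mult.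
  assert (Rabs (f x) <= K * d x x0) by (replace (f x) with (f x - f x0) by (rewrite H0; ring); apply Hf).
  assert (Rabs r * Rabs (f x) <= Rabs r * (K * d x x0)) by (apply Rmult_le_compat_l; auto using Rabs_pos).
  lra. Qed.

Lemma Fmem_bounded {X : Type} (d : X -> X -> R) x0 phi : is_metric d -> Fmem d x0 phi ->
  exists C, 0 <= C /\ dual_le d x0 phi C.
Proof. intros Hd HF. destruct (HF 1 Rlt_0_1) as [c Hc]. exists (1 + cw d x0 c).
  split; [pose proof (cw_nonneg d x0 c Hd); lra|].
  intros f K Hf HK Hl. specialize (Hc f K Hf HK Hl). simpl in Hc.
  pose proof (comb_bound d x0 c f K Hd (proj1 Hf) Hl HK).
  replace (phi f) with ((phi f - comb_delta c f) + comb_delta c f) by ring.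
  eapply Rle_trans; [apply Rabs_triang|]. lra. Qed.

Lemma Fmem_lin {X : Type} (d : X -> X -> R) x0 phi : is_metric d -> Fmem d x0 phi -> lin0 d x0 phi.
Proof. intros Hd HF f g a b Hf Hg.
  pose proof (lip0_comb d x0 f g a b Hd Hf Hg) as Hh.
  destruct (lip_nonneg d x0 _ Hd Hf) as [Kf [Kf0 Hkf]].
  destruct (lip_nonneg d x0 _ Hd Hg) as [Kg [Kg0 Hkg]].
  destruct (lip_nonneg d x0 _ Hd Hh) as [Kh [Kh0 Hkh]].
  assert (phi (fadd (fscal a f) (fscal b g)) - (a * phi f + b * phi g) = 0); [|lra].
  apply (small0A _ (Kh + Rabs a * Kf + Rabs b * Kg)).
  pose proof (Rabs_pos a); pose proof (Rabs_pos b); nra.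
  intros e He. destruct (HF e He) as [c Hc].
  pose proof (Hc _ _ Hh Kh0 Hkh) as E1. pose proof (Hc _ _ Hf Kf0 Hkf) as E2. pose proof (Hc _ _ Hg Kg0 Hkg) as E3.
  simpl in *. rewrite comb_lin in E1.
  set (h := fadd (fscal a f) (fscal b g)) in *.
  replace (phi h - (a * phi f + b * phi g)) with
    ((phi h - (a * comb_delta c f + b * comb_delta c g)) - a * (phi f - comb_delta c f) - b * (phi g - comb_delta c g)) by ring.
  unfold Rminus at 1. eapply Rle_trans; [apply Rabs_triang|]. rewrite Rabs_Ropp.
  unfold Rminus at 1. eapply Rle_trans; [apply Rplus_le_compat_r; apply Rabs_triang|]. rewrite Rabs_Ropp, !Rabs_mult.
  assert (Rabs a * Rabs (phi f - comb_delta c f) <= Rabs a * (e * Kf)) by (apply Rmult_le_compat_l; auto using Rabs_pos).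
  assert (Rabs b * Rabs (phi g - comb_delta c g) <= Rabs b * (e * Kg)) by (apply Rmult_le_compat_l; auto using Rabs_pos).
  nra. Qed.

Lemma Fmem_comb {X : Type} (d : X -> X -> R) x0 phi c : (forall f, phi f = comb_delta c f) -> Fmem d x0 phi.
Proof. intros H e He. exists c. intros f K _ HK _. rewrite H. unfold Rminus; rewrite Rplus_opp_r, Rabs_R0.
  nra. Qed.


Lemma linf_B_nonneg {I : Type} (b : I -> R) B : inhabited I -> linf_le b B -> 0 <= B.
Proof. intros [i] H. specialize (H i). pose proof (Rabs_pos (b i)). lra. Qed.

Lemma bsum_bound {I : Type} (b u : I -> R) B C : inhabited I -> linf_le b B ->
  (forall L, NoDup L -> lsum (fun i => Rabs (u i)) L <= C) ->
  forall L, NoDup L -> lsum (fun i => Rabs (b i * u i)) L <= B * C.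
Proof. intros hI Hb HC L N. pose proof (linf_B_nonneg b B hI Hb).
  eapply Rle_trans; [apply lsum_le with (b := fun i => B * Rabs (u i))|].
  intros i; rewrite Rabs_mult; apply Rmult_le_compat_r; auto using Rabs_pos.
  rewrite lsum_scal. apply Rmult_le_compat_l; auto. Qed.

Lemma lsum_div {I : Type} (u : I -> R) (D : R) L : 0 < D ->
  lsum (fun i => Rabs (u i / D)) L = lsum (fun i => Rabs (u i)) L / D.
Proof. intros HD. unfold Rdiv. rewrite Rmult_comm, <- lsum_scal. apply lsum_ext. intros i.
  rewrite Rabs_mult, Rabs_inv, (Rabs_right D); [ring|lra]. Qed.


Lemma beur_K_nonneg {X I : Type} (d : X -> X -> R) x0 (xs ys : I -> X) K fs :
  inhabited I -> (forall i, xs i <> ys i) -> beurling_set d x0 xs ys K fs -> 0 <= K.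
Proof. intros [i] hxy [_ [_ H]]. specialize (H _ _ (hxy i) nil (NoDup_nil _)). simpl in H. lra. Qed.

Lemma beur_sum {X I : Type} (d : X -> X -> R) x0 (xs ys : I -> X) K fs :
  is_metric d -> inhabited I -> (forall i, xs i <> ys i) -> beurling_set d x0 xs ys K fs ->
  forall x y L, NoDup L -> lsum (fun i => Rabs (fs i x - fs i y)) L <= K * d x y.
Proof. intros hd hI hxy hB x y L N. pose proof (beur_K_nonneg d x0 xs ys K fs hI hxy hB).
  destruct (classic (x = y)) as [->|Hn].
  - rewrite d_refl; auto. rewrite (lsum_ext _ (fun _ => 0 * 0)).
    rewrite lsum_scal; lra. intros i; unfold Rminus; rewrite Rplus_opp_r, Rabs_R0; ring.
  - destruct hB as [_ [_ HH]]. specialize (HH x y Hn L N). pose proof (d_pos d hd x y Hn).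
    unfold l1_le in HH; cbv beta in HH. rewrite lsum_div in HH; auto. apply Rmult_le_reg_r with (/ d x y). apply Rinv_0_lt_compat; auto.
    rewrite Rmult_assoc, Rinv_r; lra. Qed.

Lemma beur_lip {X I : Type} (d : X -> X -> R) x0 (xs ys : I -> X) K fs :
  is_metric d -> inhabited I -> (forall i, xs i <> ys i) -> beurling_set d x0 xs ys K fs ->
  forall i, lip0 d x0 (fs i) /\ lip_le d (fs i) K.
Proof. intros hd hI hxy hB i.
  assert (lip_le d (fs i) K).
  { intros x y. pose proof (beur_sum d x0 xs ys K fs hd hI hxy hB x y (i :: nil)). simpl in H.
    assert (NoDup (i :: nil)) by (repeat constructor; auto). specialize (H H0). lra. }
  split; auto. split; [apply (proj1 hB)|]. exists K; auto. Qed.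

Definition Rb {X I : Type} (fs : I -> X -> R) (b : I -> R) : X -> R := fun x => usum (fun i => b i * fs i x).

Lemma R_hs {X I : Type} (d : X -> X -> R) x0 (xs ys : I -> X) K fs :
  is_metric d -> inhabited I -> (forall i, xs i <> ys i) -> beurling_set d x0 xs ys K fs ->
  forall b, linf b -> forall x, has_sum (fun i => b i * fs i x) (Rb fs b x).
Proof. intros hd hI hxy hB b [B Hb] x.
  destruct (has_sum_exists (fun i => b i * fs i x) (B * (K * d x x0))) as [s Hs].
  - apply bsum_bound; auto. intros L N. rewrite (lsum_ext _ (fun i => Rabs (fs i x - fs i x0))).
    apply (beur_sum d x0 xs ys K fs hd hI hxy hB x x0 L N).
    intros i. rewrite (proj1 hB i). f_equal; ring.
  - unfold Rb. rewrite (usum_eq _ s); auto. Qed.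

Lemma R_diff {X I : Type} (d : X -> X -> R) x0 (xs ys : I -> X) K fs :
  is_metric d -> inhabited I -> (forall i, xs i <> ys i) -> beurling_set d x0 xs ys K fs ->
  forall b, linf b -> forall x y, has_sum (fun i => b i * (fs i x - fs i y)) (Rb fs b x - Rb fs b y).
Proof. intros hd hI hxy hB b Hb x y.
  pose proof (has_sum_lin _ _ _ _ 1 (-1) (R_hs d x0 xs ys K fs hd hI hxy hB b Hb x) (R_hs d x0 xs ys K fs hd hI hxy hB b Hb y)).
  eapply has_sum_ext; [|replace (Rb fs b x - Rb fs b y) with (1 * Rb fs b x + -1 * Rb fs b y) by ring; apply H].
  intros i; simpl; ring. Qed.

Lemma R_lip {X I : Type} (d : X -> X -> R) x0 (xs ys : I -> X) K fs :
  is_metric d -> inhabited I -> (forall i, xs i <> ys i) -> beurling_set d x0 xs ys K fs ->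
  forall b B, linf_le b B -> lip_le d (Rb fs b) (K * B).
Proof. intros hd hI hxy hB b B Hb x y.
  pose proof (R_diff d x0 xs ys K fs hd hI hxy hB b (ex_intro _ B Hb) x y) as H.
  assert (HC := bsum_bound b (fun i => fs i x - fs i y) B (K * d x y) hI Hb
     (beur_sum d x0 xs ys K fs hd hI hxy hB x y)).
  pose proof (has_sum_bound _ _ _ H HC). lra. Qed.

Lemma R_lip0 {X I : Type} (d : X -> X -> R) x0 (xs ys : I -> X) K fs :
  is_metric d -> inhabited I -> (forall i, xs i <> ys i) -> beurling_set d x0 xs ys K fs ->
  forall b, linf b -> lip0 d x0 (Rb fs b).
Proof. intros hd hI hxy hB b [B Hb]. split.
  - unfold Rb. apply usum_eq. eapply has_sum_ext; [|apply has_sum_zero]. intros i; simpl. rewrite (proj1 hB i); ring.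
  - exists (K * B). eapply R_lip; eauto. Qed.

Lemma R_linear {X I : Type} (d : X -> X -> R) x0 (xs ys : I -> X) K fs :
  is_metric d -> inhabited I -> (forall i, xs i <> ys i) -> beurling_set d x0 xs ys K fs ->
  linear_on linf fadd fscal feq fadd fscal (Rb fs).
Proof. intros hd hI hxy hB a b u v Hu Hv z.
  unfold fadd at 2, fscal at 3 4. unfold Rb at 1. apply usum_eq.
  eapply has_sum_ext; [|apply has_sum_lin; apply (R_hs d x0 xs ys K fs); eauto].
  intros i; simpl. unfold fadd, fscal; ring. Qed.

Lemma R_top {X I : Type} (d : X -> X -> R) x0 (xs ys : I -> X) K fs :
  is_metric d -> inhabited I -> (forall i, xs i <> ys i) -> beurling_set d x0 xs ys K fs ->
  forall a, linf a -> feq (Top d xs ys (Rb fs a)) a.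
Proof. intros hd hI hxy hB a Ha j. unfold Top.
  pose proof (d_pos d hd _ _ (hxy j)) as Hdj.
  pose proof (R_diff d x0 xs ys K fs hd hI hxy hB a Ha (xs j) (ys j)) as H.
  assert (Hz : forall i, i <> j -> a i * (fs i (xs j) - fs i (ys j)) = 0).
  { intros i Hij. destruct (proj1 (proj2 hB) i) as [_ H2]. specialize (H2 j (fun e => Hij (eq_sym e))).
    unfold Top in H2. assert (fs i (xs j) - fs i (ys j) = 0); [|rewrite H0; ring].
    apply Rmult_eq_reg_r with (/ d (xs j) (ys j)). lra. apply Rinv_neq_0_compat; lra. }
  pose proof (has_sum_unique _ _ _ H (has_sum_single _ j Hz)) as E.
  rewrite E. destruct (proj1 (proj2 hB) j) as [H1 _]. unfold Top in H1.
  unfold Rdiv in *. rewrite Rmult_assoc, H1. ring. Qed.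


Definition sgn (r : R) : R := if Rle_dec 0 r then 1 else -1.
Lemma sgn_abs r : sgn r * r = Rabs r.
Proof. unfold sgn, Rabs; destruct Rle_dec; destruct Rcase_abs; lra. Qed.
Lemma sgn_abs1 r : Rabs (sgn r) <= 1.
Proof. unfold sgn, Rabs; destruct Rle_dec; destruct Rcase_abs; lra. Qed.

Fixpoint gL {X I : Type} (fs : I -> X -> R) (s : I -> R) (L : list I) : X -> R :=
  match L with nil => fun _ => 0 | i :: L' => fadd (fscal (s i) (fs i)) (fscal 1 (gL fs s L')) end.

Lemma zero_lip0 {X : Type} (d : X -> X -> R) x0 : is_metric d -> lip0 d x0 (fun _ => 0).
Proof. intros hd. split; auto. exists 0. intros x y. unfold Rminus; rewrite Rplus_opp_r, Rabs_R0.
  pose proof (d_nonneg d hd x y); lra. Qed.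

Lemma gL_lip0 {X I : Type} (d : X -> X -> R) x0 (fs : I -> X -> R) s :
  is_metric d -> (forall i, lip0 d x0 (fs i)) -> forall L, lip0 d x0 (gL fs s L).
Proof. intros hd Hf L; induction L; simpl. apply zero_lip0; auto. apply lip0_comb; auto. Qed.

Lemma gL_diff {X I : Type} (fs : I -> X -> R) s : (forall i, Rabs (s i) <= 1) ->
  forall L x y, Rabs (gL fs s L x - gL fs s L y) <= lsum (fun i => Rabs (fs i x - fs i y)) L.
Proof. intros Hs L x y; induction L; cbn [gL]. unfold Rminus; rewrite Rplus_opp_r, Rabs_R0; unfold lsum; simpl; lra.
  rewrite lsum_cons. unfold fadd, fscal.
  replace (s a * fs a x + 1 * gL fs s L x - (s a * fs a y + 1 * gL fs s L y)) with
    (s a * (fs a x - fs a y) + (gL fs s L x - gL fs s L y)) by ring.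
  eapply Rle_trans; [apply Rabs_triang|]. rewrite Rabs_mult.
  assert (Rabs (s a) * Rabs (fs a x - fs a y) <= 1 * Rabs (fs a x - fs a y)) by (apply Rmult_le_compat_r; auto using Rabs_pos).
  lra. Qed.

Lemma gL_psi {X I : Type} (d : X -> X -> R) x0 (fs : I -> X -> R) s psi :
  is_metric d -> (forall i, lip0 d x0 (fs i)) -> lin0 d x0 psi -> psi (fun _ => 0) = 0 ->
  forall L, psi (gL fs s L) = lsum (fun i => s i * psi (fs i)) L.
Proof. intros hd Hf Hp H0 L; induction L; cbn [gL]; auto.
  rewrite Hp; auto. rewrite IHL, lsum_cons. ring. apply gL_lip0; auto. Qed.

Lemma psi_sum_bound {X I : Type} (d : X -> X -> R) x0 (xs ys : I -> X) K fs psi C :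
  is_metric d -> inhabited I -> (forall i, xs i <> ys i) -> beurling_set d x0 xs ys K fs ->
  lin0 d x0 psi -> dual_le d x0 psi C ->
  forall L, NoDup L -> lsum (fun i => Rabs (psi (fs i))) L <= C * K.
Proof. intros hd hI hxy hB Hp HC L N.
  pose proof (beur_K_nonneg d x0 xs ys K fs hI hxy hB) as HK.
  assert (Hf : forall i, lip0 d x0 (fs i)) by (intros i; apply (beur_lip d x0 xs ys K fs hd hI hxy hB)).
  set (s := fun i => sgn (psi (fs i))).
  assert (H0 : psi (fun _ => 0) = 0).
  { pose proof (HC (fun _ => 0) 0 (zero_lip0 d x0 hd) (Rle_refl 0)) as H.
    assert (H1 : lip_le d (fun _ : X => 0) 0) by (destruct (zero_lip0 d x0 hd) as [_ [c Hc]]; intros x y; unfold Rminus; rewrite Rplus_opp_r, Rabs_R0; pose proof (d_nonneg d hd x y); lra).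
    specialize (H H1). rewrite Rmult_0_r in H. pose proof (Rabs_pos (psi (fun _ => 0))).
    destruct (Req_dec (psi (fun _ => 0)) 0) as [|H3]; auto. pose proof (Rabs_pos_lt _ H3). lra. }
  rewrite (lsum_ext _ (fun i => s i * psi (fs i))); [|intros i; unfold s; rewrite sgn_abs; auto].
  rewrite <- (gL_psi d x0 fs s psi hd Hf Hp H0 L).
  eapply Rle_trans; [apply Rle_abs|]. apply HC; auto. apply gL_lip0; auto.
  intros x y. eapply Rle_trans; [apply gL_diff|]. intros i; apply sgn_abs1.
  apply (beur_sum d x0 xs ys K fs hd hI hxy hB x y L N). Qed.

Lemma P_l1 {X I : Type} (d : X -> X -> R) x0 (xs ys : I -> X) K fs phi :
  is_metric d -> inhabited I -> (forall i, xs i <> ys i) -> beurling_set d x0 xs ys K fs ->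
  Fmem d x0 phi -> l1 (fun i => phi (fs i)).
Proof. intros hd hI hxy hB HF. destruct (Fmem_bounded d x0 phi hd HF) as [C [C0 HC]].
  exists (C * K). intros L N. apply (psi_sum_bound d x0 xs ys K fs phi C); auto. apply Fmem_lin; auto. Qed.

Lemma comb_hs {X I : Type} (d : X -> X -> R) x0 (xs ys : I -> X) K fs :
  is_metric d -> inhabited I -> (forall i, xs i <> ys i) -> beurling_set d x0 xs ys K fs ->
  forall b, linf b -> forall c, has_sum (fun i => b i * comb_delta c (fs i)) (comb_delta c (Rb fs b)).
Proof. intros hd hI hxy hB b Hb c. induction c as [|[r x] c IH].
  - eapply has_sum_ext; [|apply has_sum_zero]. intros i; unfold comb_delta; simpl; ring.
  - pose proof (has_sum_lin _ _ _ _ r 1 (R_hs d x0 xs ys K fs hd hI hxy hB b Hb x) IH).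
    unfold comb_delta in *; simpl in *. eapply has_sum_ext; [|
      replace (r * Rb fs b x + fold_right (fun (p : R * X) (acc : R) => fst p * Rb fs b (snd p) + acc) 0 c)
      with (r * Rb fs b x + 1 * fold_right (fun (p : R * X) (acc : R) => fst p * Rb fs b (snd p) + acc) 0 c) by ring; apply H].
    intros i; simpl; ring. Qed.

Lemma K1 {X I : Type} (d : X -> X -> R) x0 (xs ys : I -> X) K fs :
  is_metric d -> inhabited I -> (forall i, xs i <> ys i) -> beurling_set d x0 xs ys K fs ->
  forall phi b, Fmem d x0 phi -> linf b -> has_sum (fun i => b i * phi (fs i)) (phi (Rb fs b)).
Proof. intros hd hI hxy hB phi b HF Hb.
  pose proof (beur_K_nonneg d x0 xs ys K fs hI hxy hB) as HK.
  destruct Hb as [B HB]. pose proof (linf_B_nonneg b B hI HB) as HB0.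
  assert (Hb : linf b) by (exists B; auto).
  destruct (Fmem_bounded d x0 phi hd HF) as [C [C0 HC]].
  destruct (has_sum_exists (fun i => b i * phi (fs i)) (B * (C * K))) as [s Hs].
  { apply bsum_bound; auto. apply (psi_sum_bound d x0 xs ys K fs phi C); auto. apply Fmem_lin; auto. }
  replace (phi (Rb fs b)) with s; auto.
  assert (s - phi (Rb fs b) = 0); [|lra].
  apply (small0A _ (2 * K * B)); [nra|]. intros e He.
  destruct (HF e He) as [c Hc].
  set (psi := fun f => phi f - comb_delta c f) in Hc.
  assert (Hlin : lin0 d x0 psi).
  { intros f g a0 b0 Hf Hg. unfold psi. rewrite (Fmem_lin d x0 phi hd HF f g a0 b0 Hf Hg), comb_lin. ring. }
  pose proof (has_sum_lin _ _ _ _ 1 (-1) Hs (comb_hs d x0 xs ys K fs hd hI hxy hB b Hb c)) as H2.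
  assert (H3 : has_sum (fun i => b i * psi (fs i)) (s - comb_delta c (Rb fs b))).
  { eapply has_sum_ext; [|replace (s - comb_delta c (Rb fs b)) with (1 * s + -1 * comb_delta c (Rb fs b)) by ring; apply H2].
    intros i; unfold psi; simpl; ring. }
  pose proof (has_sum_bound _ _ _ H3 (bsum_bound b _ B _ hI HB (psi_sum_bound d x0 xs ys K fs psi e hd hI hxy hB Hlin Hc))) as E1.
  assert (E2 : Rabs (psi (Rb fs b)) <= e * (K * B)).
  { apply Hc. apply (R_lip0 d x0 xs ys K fs); auto. nra. apply (R_lip d x0 xs ys K fs); auto. }
  unfold psi in E2.
  replace (s - phi (Rb fs b)) with ((s - comb_delta c (Rb fs b)) - (phi (Rb fs b) - comb_delta c (Rb fs b))) by ring.
  unfold Rminus at 1. eapply Rle_trans; [apply Rabs_triang|]. rewrite Rabs_Ropp. nra. Qed.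

Lemma R_wstar {X I : Type} (d : X -> X -> R) x0 (xs ys : I -> X) K fs :
  is_metric d -> inhabited I -> (forall i, xs i <> ys i) -> beurling_set d x0 xs ys K fs ->
  wstar_continuous d x0 (Rb fs).
Proof. intros hd hI hxy hB a Ha phis eps Hphis He.
  exists (map (fun phi => fun i => phi (fs i)) phis), eps. split; [|split; auto].
  - intros l Hl. apply in_map_iff in Hl. destruct Hl as [phi [<- Hp]]. apply (P_l1 d x0 xs ys K fs); auto.
  - intros b Hb Hl phi Hp. specialize (Hl (fun i => phi (fs i)) (in_map _ _ _ Hp)).
    rewrite (usum_eq _ (phi (Rb fs b) - phi (Rb fs a))) in Hl; auto.
    pose proof (has_sum_lin _ _ _ _ 1 (-1) (K1 d x0 xs ys K fs hd hI hxy hB phi b (Hphis _ Hp) Hb)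
       (K1 d x0 xs ys K fs hd hI hxy hB phi a (Hphis _ Hp) Ha)).
    eapply has_sum_ext; [|replace (phi (Rb fs b) - phi (Rb fs a)) with (1 * phi (Rb fs b) + -1 * phi (Rb fs a)) by ring; apply H].
    intros i; simpl; ring. Qed.


Definition ee {I : Type} (j : I) : I -> R := fun i => if deq i j then 1 else 0.

Lemma ee_abs {I : Type} (j i : I) : Rabs (ee j i) <= 1.
Proof. unfold ee; destruct deq; [rewrite Rabs_R1|rewrite Rabs_R0]; lra. Qed.
Lemma ee_same {I : Type} (j : I) : ee j j = 1.
Proof. unfold ee; destruct deq; congruence. Qed.
Lemma ee_diff {I : Type} (j i : I) : i <> j -> ee j i = 0.
Proof. unfold ee; destruct deq; congruence. Qed.

Lemma lsum_zero {I : Type} (u : I -> R) L : (forall i, In i L -> u i = 0) -> lsum u L = 0.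
Proof. induction L; intros H; auto. rewrite lsum_cons, H, IHL; [ring| |left; auto]. intros; apply H; right; auto. Qed.

Lemma ee_l1 {I : Type} (j : I) : l1_le (ee j) 1.
Proof. intros L N. destruct (classic (In j L)).
  - rewrite (lsum_single _ j); auto. rewrite ee_same, Rabs_R1; lra. intros i Hi; rewrite ee_diff, Rabs_R0; auto.
  - rewrite lsum_zero; [lra|]. intros i Hi. rewrite ee_diff, Rabs_R0; auto. intros ->; contradiction. Qed.

Lemma lsum_in_ge {I : Type} (u : I -> R) L i : (forall j, 0 <= u j) -> In i L -> u i <= lsum u L.
Proof. intros H Hi; induction L; [destruct Hi|]. destruct Hi as [->|Hi]; rewrite lsum_cons.
  pose proof (lsum_nonneg u L H); lra. specialize (IHL Hi). specialize (H a); lra. Qed.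

Lemma c0_linf {I : Type} (a : I -> R) : c0 a -> linf a.
Proof. intros H. destruct (H 1 Rlt_0_1) as [L HL]. exists (1 + lsum (fun i => Rabs (a i)) L).
  intros i. pose proof (lsum_nonneg (fun i => Rabs (a i)) L (fun i => Rabs_pos _)).
  destruct (Rle_dec 1 (Rabs (a i))). pose proof (lsum_in_ge (fun i => Rabs (a i)) L i (fun i => Rabs_pos _) (HL i r)). simpl in *; lra. lra. Qed.

Lemma lowerM {X I : Type} (d : X -> X -> R) x0 (xs ys : I -> X) M C :
  is_metric d -> inhabited I -> (forall i, xs i <> ys i) -> interp_const d x0 xs ys M ->
  (forall a, linf_le a 1 -> exists f, lip0 d x0 f /\ lip_le d f C /\ feq (Top d xs ys f) a) -> M <= C.
Proof. intros hd [i] hxy hM H. destruct (Rle_dec 1 C) as [HC|HC].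
  - apply (proj1 hM). split; auto.
  - exfalso. destruct (H (ee i) (ee_abs i)) as [f [_ [Hl Ht]]]. specialize (Ht i). rewrite ee_same in Ht.
    unfold Top in Ht. pose proof (d_pos d hd _ _ (hxy i)) as Hd.
    assert (f (xs i) - f (ys i) = d (xs i) (ys i)).
    { apply Rmult_eq_reg_r with (/ d (xs i) (ys i)). rewrite Rinv_r; lra. apply Rinv_neq_0_compat; lra. }
    specialize (Hl (xs i) (ys i)). rewrite H0, Rabs_right in Hl; nra. Qed.

Lemma M_ge1 {X I : Type} (d : X -> X -> R) x0 (xs ys : I -> X) M : interp_const d x0 xs ys M -> 1 <= M.
Proof. intros hM. apply (proj2 hM). intros K [HK _]; auto. Qed.

Lemma bound_to_M {X I : Type} (d : X -> X -> R) x0 (xs ys : I -> X) M C Rop :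
  is_metric d -> inhabited I -> (forall i, xs i <> ys i) -> interp_const d x0 xs ys M ->
  (forall a, linf a -> lip0 d x0 (Rop a)) -> op_bounded linf linf_le (lip_le d) Rop C ->
  (forall a, linf a -> feq (Top d xs ys (Rop a)) a) -> M <= C.
Proof. intros hd hI hxy hM H1 H2 H3. apply (lowerM d x0 xs ys); auto.
  intros a Ha. assert (linf a) by (exists 1; auto). exists (Rop a). split; auto. split; auto.
  rewrite <- (Rmult_1_r C). apply H2; auto; lra. Qed.

Lemma beur_M {X I : Type} (d : X -> X -> R) x0 (xs ys : I -> X) M K fs :
  is_metric d -> inhabited I -> (forall i, xs i <> ys i) -> interp_const d x0 xs ys M ->
  beurling_set d x0 xs ys K fs -> M <= K.
Proof. intros hd hI hxy hM hB. apply (bound_to_M d x0 xs ys M K (Rb fs)); auto.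
  apply (R_lip0 d x0 xs ys K fs); auto.
  intros v c Hv Hc Hvc. apply (R_lip d x0 xs ys K fs); auto.
  apply (R_top d x0 xs ys K fs); auto. Qed.

Lemma i_ii {X I : Type} (d : X -> X -> R) x0 (xs ys : I -> X) M :
  is_metric d -> inhabited I -> (forall i, xs i <> ys i) -> interp_const d x0 xs ys M ->
  cond_i d x0 xs ys M -> cond_ii d x0 xs ys M.
Proof. intros hd hI hxy hM [fs hB]. exists (Rb fs).
  split; [apply (R_lip0 d x0 xs ys M fs); auto|].
  split; [apply (R_linear d x0 xs ys M fs); auto|].
  split; [apply (R_wstar d x0 xs ys M fs); auto|].
  split; [|apply (R_top d x0 xs ys M fs); auto].
  split. intros v c Hv Hc Hvc. apply (R_lip d x0 xs ys M fs); auto.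
  intros C HC Hb. assert (M <= C); [|lra].
  apply (bound_to_M d x0 xs ys M C (Rb fs)); auto.
  apply (R_lip0 d x0 xs ys M fs); auto. apply (R_top d x0 xs ys M fs); auto. Qed.

Lemma ii_v {X I : Type} (d : X -> X -> R) x0 (xs ys : I -> X) M :
  cond_ii d x0 xs ys M -> cond_v d x0 xs ys M.
Proof. intros [Rop [H1 [H2 [_ [[H4 _] H5]]]]]. exists Rop.
  split; [intros a Ha; apply H1, c0_linf; auto|].
  split; [intros a b u v Hu Hv; apply H2; apply c0_linf; auto|].
  split; [intros v c Hv; apply H4, c0_linf; auto|].
  intros a Ha; apply H5, c0_linf; auto. Qed.

Lemma gL_ee_notin {I : Type} (s : I -> R) L j : ~ In j L -> gL (fun i => ee i) s L j = 0.
Proof. induction L; intros H; cbn [gL]; auto. unfold fadd, fscal. rewrite IHL, ee_diff; [ring| |].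
  intros ->; apply H; left; auto. intro; apply H; right; auto. Qed.

Lemma gL_ee_in {I : Type} (s : I -> R) L j : gL (fun i => ee i) s L j <> 0 -> In j L.
Proof. intros H. destruct (classic (In j L)); auto. exfalso; apply H, (gL_ee_notin s); auto. Qed.

Lemma gL_ee_bound {I : Type} (s : I -> R) L : (forall i, Rabs (s i) <= 1) -> NoDup L ->
  linf_le (gL (fun i => ee i) s L) 1.
Proof. intros Hs N j. induction L as [|a L IH]; cbn [gL]. rewrite Rabs_R0; lra.
  inversion N; subst. unfold fadd, fscal. destruct (deq j a) as [->|Hja].
  - rewrite gL_ee_notin, ee_same; auto. rewrite Rmult_1_r, Rmult_0_r, Rplus_0_r; auto.
  - rewrite ee_diff; auto. rewrite Rmult_0_r, Rplus_0_l, Rmult_1_l; auto. Qed.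

Lemma gL_c0 {I : Type} (s : I -> R) L : c0 (gL (fun i => ee i) s L).
Proof. intros e He. exists L. intros i Hi. apply (gL_ee_in s). intros E; rewrite E, Rabs_R0 in Hi; lra. Qed.

Lemma v_i {X I : Type} (d : X -> X -> R) x0 (xs ys : I -> X) M :
  is_metric d -> inhabited I -> (forall i, xs i <> ys i) ->
  cond_v d x0 xs ys M -> cond_i d x0 xs ys M.
Proof. intros hd hI hxy [R0 [H1 [H2 [H3 H4]]]].
  assert (Hc0 : forall i : I, c0 (ee i)).
  { intros i e He. exists (i :: nil). intros j Hj. destruct (deq j i) as [->|Hji]; [left; auto|].
    rewrite ee_diff, Rabs_R0 in Hj; auto; lra. }
  exists (fun i => R0 (ee i)). split; [intros i; apply (H1 _ (Hc0 i))|]. split.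
  - intros i. split. rewrite (H4 _ (Hc0 i)). apply ee_same.
    intros j Hj. rewrite (H4 _ (Hc0 i)). apply ee_diff; auto.
  - intros x y Hxy L N. pose proof (d_pos d hd x y Hxy) as Hd.
    set (s := fun i => sgn (R0 (ee i) x - R0 (ee i) y)).
    assert (Hz : forall z, R0 (gL (fun i => ee i) s L) z = lsum (fun i => s i * R0 (ee i) z) L).
    { clear N. induction L as [|a L IH]; intros z; cbn [gL].
      - assert (c0 (fun _ : I => 0)) by (intros e He; exists nil; intros i Hi; rewrite Rabs_R0 in Hi; lra).
        pose proof (H2 0 0 _ _ H H z). unfold fadd at 2, fscal at 3 4 in H0.
        replace (fadd (fscal 0 (fun _ : I => 0)) (fscal 0 (fun _ : I => 0))) with (fun _ : I => 0) in H0.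
        rewrite H0; unfold lsum; simpl; ring.
        apply functional_extensionality; intros; unfold fadd, fscal; ring.
      - rewrite (H2 _ _ _ _ (Hc0 a) (gL_c0 s L) z). unfold fadd, fscal. rewrite IH, lsum_cons. ring. }
    assert (Hb := H3 _ 1 (gL_c0 s L) Rle_0_1 (gL_ee_bound s L (fun i => sgn_abs1 _) N) x y).
    rewrite !Hz in Hb. unfold l1_le. cbv beta. rewrite lsum_div; auto.
    apply Rmult_le_reg_r with (d x y); auto. unfold Rdiv; rewrite Rmult_assoc, Rinv_l; [|lra].
    rewrite Rmult_1_r in Hb.
    replace (lsum (fun i => s i * R0 (ee i) x) L - lsum (fun i => s i * R0 (ee i) y) L)
      with (lsum (fun i => Rabs (R0 (ee i) x - R0 (ee i) y)) L) in Hb.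
    pose proof (Rle_abs (lsum (fun i => Rabs (R0 (ee i) x - R0 (ee i) y)) L)). lra.
    replace (lsum (fun i => s i * R0 (ee i) x) L - lsum (fun i => s i * R0 (ee i) y) L)
      with (lsum (fun i => s i * R0 (ee i) x) L + -1 * lsum (fun i => s i * R0 (ee i) y) L) by ring.
    rewrite <- (lsum_scal (-1)), <- lsum_plus. apply lsum_ext. intros i. unfold s. rewrite <- sgn_abs. ring. Qed.


Lemma iv_beur {X I : Type} (d : X -> X -> R) x0 (xs ys : I -> X) C (f : X -> I -> R) :
  is_metric d -> feq (f x0) (fun _ => 0) ->
  (forall x y, l1_le (fadd (f x) (fscal (-1) (f y))) (C * d x y)) ->
  (forall i, (f (xs i) i - f (ys i) i) / d (xs i) (ys i) = 1 /\
     forall j, j <> i -> (f (xs i) j - f (ys i) j) / d (xs i) (ys i) = 0) ->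
  beurling_set d x0 xs ys C (fun i x => f x i).
Proof. intros hd H0 Hl Ht. split; [intros i; apply H0|]. split.
  - intros i. unfold Top. split; [apply Ht|]. intros j Hj. apply (proj2 (Ht j)). auto.
  - intros x y Hxy L N. pose proof (d_pos d hd x y Hxy) as Hd. unfold l1_le; cbv beta.
    rewrite lsum_div; auto. specialize (Hl x y L N). unfold fadd, fscal in Hl; cbv beta in Hl.
    rewrite (lsum_ext _ (fun i => Rabs (f x i + -1 * f y i))); [|intros i; f_equal; ring].
    apply Rmult_le_reg_r with (d x y); auto. unfold Rdiv; rewrite Rmult_assoc, Rinv_l; lra. Qed.

Lemma Fmem_delta {X : Type} (d : X -> X -> R) x0 x : Fmem d x0 (delta x).
Proof. apply (Fmem_comb d x0 _ ((1, x) :: nil)). intros f; unfold delta, comb_delta; simpl; ring. Qed.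

Lemma Fmem_delta2 {X : Type} (d : X -> X -> R) x0 a x b y : Fmem d x0 (fadd (fscal a (delta x)) (fscal b (delta y))).
Proof. apply (Fmem_comb d x0 _ ((a, x) :: (b, y) :: nil)). intros f; unfold fadd, fscal, delta, comb_delta; simpl; ring. Qed.

Lemma Sop_ee {X I : Type} (d : X -> X -> R) (xs ys : I -> X) j :
  Sop d xs ys (ee j) = fadd (fscal (/ d (xs j) (ys j)) (delta (xs j))) (fscal (- / d (xs j) (ys j)) (delta (ys j))).
Proof. apply functional_extensionality; intros f. unfold Sop. apply usum_eq.
  set (u := fun i => ee j i * molecule d (xs i) (ys i) f).
  replace (fadd _ _ f) with (u j). apply has_sum_single. intros i Hi; unfold u; rewrite ee_diff; auto; ring.
  unfold u, fadd, fscal, delta, molecule. rewrite ee_same. unfold Rdiv; ring. Qed.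

Lemma iii_beur {X I : Type} (d : X -> X -> R) x0 (xs ys : I -> X) C P :
  is_metric d -> (forall i, xs i <> ys i) ->
  linear_on (Fmem d x0) fadd fscal feq fadd fscal P ->
  op_bounded (Fmem d x0) (dual_le d x0) l1_le P C ->
  (forall l, l1 l -> feq (P (Sop d xs ys l)) l) ->
  beurling_set d x0 xs ys C (fun i x => P (delta x) i).
Proof. intros hd hxy Hlin Hb HS. apply (iv_beur d x0 xs ys C (fun x => P (delta x))); auto.
  - intros i. assert (H : l1_le (P (delta x0)) (C * 0)).
    { apply Hb. apply Fmem_delta. lra. intros f K Hf HK Hl. unfold delta. rewrite (proj1 Hf), Rabs_R0; lra. }
    specialize (H (i :: nil)). assert (NoDup (i :: nil)) by (repeat constructor; auto).
    specialize (H H0). simpl in H. pose proof (Rabs_pos (P (delta x0) i)).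
    destruct (Req_dec (P (delta x0) i) 0); auto. pose proof (Rabs_pos_lt _ H2). lra.
  - intros x y L N. pose proof (Hlin 1 (-1) _ _ (Fmem_delta d x0 x) (Fmem_delta d x0 y)) as E.
    assert (H : l1_le (P (fadd (fscal 1 (delta x)) (fscal (-1) (delta y)))) (C * d x y)).
    { apply Hb. apply Fmem_delta2. apply d_nonneg; auto. intros f K Hf HK Hl. unfold fadd, fscal, delta.
      replace (1 * f x + -1 * f y) with (f x - f y) by ring. specialize (Hl x y). lra. }
    specialize (H L N). rewrite (lsum_ext _ (fun i => Rabs (P (fadd (fscal 1 (delta x)) (fscal (-1) (delta y))) i))); auto.
    intros i; rewrite E. unfold fadd, fscal. f_equal; ring.
  - intros i. pose proof (d_pos d hd _ _ (hxy i)) as Hd.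
    assert (Hl1 : l1 (ee i)) by (exists 1; apply ee_l1).
    pose proof (HS _ Hl1) as E. rewrite Sop_ee in E.
    pose proof (Hlin (/ d (xs i) (ys i)) (- / d (xs i) (ys i)) _ _ (Fmem_delta d x0 (xs i)) (Fmem_delta d x0 (ys i))) as E2.
    assert (Hk : forall j, (P (delta (xs i)) j - P (delta (ys i)) j) / d (xs i) (ys i) = ee i j).
    { intros j. rewrite <- (E j), E2. unfold fadd, fscal. unfold Rdiv; ring. }
    split; [rewrite Hk; apply ee_same|]. intros j Hj; rewrite Hk; apply ee_diff; auto. Qed.

Lemma i_iii {X I : Type} (d : X -> X -> R) x0 (xs ys : I -> X) M :
  is_metric d -> inhabited I -> (forall i, xs i <> ys i) -> interp_const d x0 xs ys M ->
  cond_i d x0 xs ys M -> cond_iii d x0 xs ys M.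
Proof. intros hd hI hxy hM [fs hB]. exists (fun phi i => phi (fs i)).
  assert (Hlin : linear_on (Fmem d x0) fadd fscal feq fadd fscal (fun phi i => phi (fs i))).
  { intros a b u v Hu Hv z. reflexivity. }
  assert (HS : forall l, l1 l -> feq ((fun phi i => phi (fs i)) (Sop d xs ys l)) l).
  { intros l Hl j. cbv beta. unfold Sop. apply usum_eq.
    set (u := fun i => l i * molecule d (xs i) (ys i) (fs j)).
    assert (Hm : forall i, molecule d (xs i) (ys i) (fs j) = Top d xs ys (fs j) i) by reflexivity.
    replace (l j) with (u j). apply has_sum_single. intros i Hi. unfold u. rewrite Hm, (proj2 (proj1 (proj2 hB) j)); auto; ring.
    unfold u. rewrite Hm, (proj1 (proj1 (proj2 hB) j)). ring. }
  split; [intros phi HF; apply (P_l1 d x0 xs ys M fs); auto|].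
  split; auto. split; auto. split.
  - intros v c Hv Hc Hvc L N. rewrite Rmult_comm. apply (psi_sum_bound d x0 xs ys M fs v c); auto. apply Fmem_lin; auto.
  - intros C HC Hb. assert (M <= C); [|lra].
    apply (beur_M d x0 xs ys M C (fun i x => delta x (fs i))); auto.
    apply (iii_beur d x0 xs ys C (fun phi i => phi (fs i))); auto. Qed.

Lemma i_iv {X I : Type} (d : X -> X -> R) x0 (xs ys : I -> X) M :
  is_metric d -> inhabited I -> (forall i, xs i <> ys i) -> interp_const d x0 xs ys M ->
  cond_i d x0 xs ys M -> cond_iv d x0 xs ys M.
Proof. intros hd hI hxy hM [fs hB]. exists (fun x i => fs i x).
  assert (Hlip : forall x y, l1_le (fadd (fun i => fs i x) (fscal (-1) (fun i => fs i y))) (M * d x y)).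
  { intros x y L N. unfold fadd, fscal.
    rewrite (lsum_ext _ (fun i => Rabs (fs i x - fs i y))); [|intros i; f_equal; ring].
    apply (beur_sum d x0 xs ys M fs); auto. }
  split; [intros i; apply (proj1 hB)|]. split.
  - intros x. exists (M * d x x0). intros L N. specialize (Hlip x x0 L N). unfold fadd, fscal in Hlip.
    rewrite (lsum_ext _ (fun i => Rabs (fs i x + -1 * fs i x0))); auto.
    intros i; rewrite (proj1 hB i); f_equal; ring.
  - split; [split; auto|].
    + intros C HC Hb. assert (M <= C); [|lra].
      apply (beur_M d x0 xs ys M C (fun i x => fs i x)); auto.
      apply (iv_beur d x0 xs ys C (fun x i => fs i x)); auto.
      intros i; apply (proj1 hB).
      intros i. split; [apply (proj1 (proj1 (proj2 hB) i))|]. intros j Hj. apply (proj2 (proj1 (proj2 hB) j)). auto.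
    + intros i. split; [apply (proj1 (proj1 (proj2 hB) i))|]. intros j Hj. apply (proj2 (proj1 (proj2 hB) j)). auto. Qed.

Theorem theorem3p12 (X I : Type) (d : X -> X -> R) (x0 : X) (xs ys : I -> X) (M : R)
  (hd : is_metric d)
  (hI : inhabited I)
  (hxy : forall i, xs i <> ys i)
  (hinterp : lip_interpolating d x0 xs ys)
  (hM : interp_const d x0 xs ys M) :
  (cond_i d x0 xs ys M <-> cond_ii d x0 xs ys M) /\
  (cond_i d x0 xs ys M <-> cond_iii d x0 xs ys M) /\
  (cond_i d x0 xs ys M <-> cond_iv d x0 xs ys M) /\
  (cond_i d x0 xs ys M <-> cond_v d x0 xs ys M).
Proof.
  split; [split; [apply i_ii; auto|intros H; apply v_i; auto; apply ii_v; auto]|].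
  split; [split; [apply i_iii; auto|]|].
  { intros [P [_ [Hlin [[Hb _] HS]]]]. exists (fun i x => P (delta x) i). apply iii_beur; auto. }
  split; [split; [apply i_iv; auto|]|].
  { intros [f [H0 [_ [[Hl _] Ht]]]]. exists (fun i x => f x i). apply iv_beur; auto. }
  split; [intros H; apply ii_v, i_ii; auto|apply v_i; auto].
Qed.
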